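(* Let $a,b,c,p\in\mathbb{C}$ with $-c\notin\mathbb{N}\cup\{0\}$. Define $(u_n)$ and $(v_n)$ by $u_0=1$, $u_1=\frac{ab}{c}+ip$, $u_2=\frac{iabp}{c}+\frac{a(a+1)b(b+1)}{2c(c+1)}-\frac{p^2}{2}$, $v_0=1$, $v_1=\frac{ab}{c}-ip$, $v_2=-\frac{iabp}{c}+\frac{a(a+1)b(b+1)}{2c(c+1)}-\frac{p^2}{2}$, and for all integers $n\ge2$, \[ u_{n+1}=\frac{(a+n)(b+n)+ip(c+2n)}{(n+1)(c+n)}u_n+\frac{p\left(p-i(a+b+2n-1)\right)}{(n+1)(c+n)}u_{n-1}-\frac{p^2}{(n+1)(c+n)}u_{n-2}, \] \[ v_{n+1}=\frac{(a+n)(b+n)-ip(c+2n)}{(n+1)(c+n)}v_n+\frac{p\left(p+i(a+b+2n-1)\right)}{(n+1)(c+n)}v_{n-1}-\frac{p^2}{(n+1)(c+n)}v_{n-2}. \] Then \[ \cos(pz)F(a,b;c;z)=\sum_{n=0}^\infty\frac{u_n+v_n}{2}z^n,\qquad |z|<1. \]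
   Context: Here $i$ is the imaginary unit. For $a\in\mathbb{C}$, $(a)_n=a(a+1)\cdots(a+n-1)$ denotes the Pochhammer symbol, with $(a)_0=1$. For $a,b,c\in\mathbb{C}$ with $-c\notin\mathbb{N}\cup\{0\}$, the Gaussian hypergeometric function is $F(a,b;c;z)=\sum_{n=0}^\infty \frac{(a)_n(b)_n}{(c)_n\,n!}z^n$, $|z|<1$. *)

(* Defs.v *)
From Stdlib Require Import Reals.
From Coquelicot Require Import Coquelicot.
Open Scope C_scope.

Definition Cexp (w : C) : C :=
  (exp (Re w) * cos (Im w), exp (Re w) * sin (Im w))%R.
Definition Ccos (w : C) : C := (Cexp (Ci * w) + Cexp (- (Ci * w))) / 2.

Fixpoint poch (a : C) (n : nat) : C :=
  match n with O => 1 | S k => poch a k * (a + RtoC (INR k)) end.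

Definition CSeries (f : nat -> C) : C :=
  (Series (fun n => Re (f n)), Series (fun n => Im (f n))).

Definition hyp_term (a b c z : C) (n : nat) : C :=
  poch a n * poch b n / (poch c n * RtoC (INR (Factorial.fact n))) * Cpow z n.

Definition hypF (a b c z : C) : C := CSeries (hyp_term a b c z).

(* Main.v *)
Require Import Defs.
From Stdlib Require Import Reals Lra Lia.
From Coquelicot Require Import Coquelicot.
Open Scope C_scope.

Fixpoint csum (f : nat -> C) (n : nat) : C :=
  match n with O => f O | S m => csum f m + f (S m) end.

Definition conv (x y : nat -> C) (n : nat) : C :=
  csum (fun k => x k * y (n - k)%nat) n.

Lemma csum_ext (f g : nat -> C) n :
  (forall k, (k <= n)%nat -> f k = g k) -> csum f n = csum g n.
Proof.
  induction n; intros H; simpl.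
  - apply H; lia.
  - rewrite IHn; [ rewrite H; [reflexivity | lia] | intros; apply H; lia].
Qed.

Lemma csum_shift (f : nat -> C) n :
  csum f (S n) = f O + csum (fun k => f (S k)) n.
Proof.
  induction n.
  - simpl. reflexivity.
  - change (csum f (S (S n))) with (csum f (S n) + f (S (S n))).
    rewrite IHn. simpl. ring.
Qed.

Lemma csum_plus (f g : nat -> C) n :
  csum (fun k => f k + g k) n = csum f n + csum g n.
Proof. induction n; simpl; [ring| rewrite IHn; ring]. Qed.

Lemma csum_scal (a : C) (f : nat -> C) n :
  csum (fun k => a * f k) n = a * csum f n.
Proof. induction n; simpl; [ring| rewrite IHn; ring]. Qed.

Lemma csum_zero (f : nat -> C) n : (forall k, f k = 0) -> csum f n = 0.
Proof. intros H; induction n; simpl; rewrite ?IHn, H; ring. Qed.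

Lemma Re_csum (f : nat -> C) n : Re (csum f n) = sum_f_R0 (fun k => Re (f k)) n.
Proof. induction n; simpl; [reflexivity| rewrite <- IHn; reflexivity]. Qed.
Lemma Im_csum (f : nat -> C) n : Im (csum f n) = sum_f_R0 (fun k => Im (f k)) n.
Proof. induction n; simpl; [reflexivity| rewrite <- IHn; reflexivity]. Qed.

Definition CS (f : nat -> C) (l : C) : Prop :=
  is_series (fun n => Re (f n)) (Re l) /\ is_series (fun n => Im (f n)) (Im l).

Lemma Re_sum_n (f : nat -> C) n : Re (sum_n f n) = sum_n (fun k => Re (f k)) n.
Proof.
  induction n.
  - rewrite !sum_O. reflexivity.
  - rewrite !sum_Sn. rewrite <- IHn. reflexivity.
Qed.
Lemma Im_sum_n (f : nat -> C) n : Im (sum_n f n) = sum_n (fun k => Im (f k)) n.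
Proof.
  induction n.
  - rewrite !sum_O. reflexivity.
  - rewrite !sum_Sn. rewrite <- IHn. reflexivity.
Qed.

Lemma CS_is_series f l : CS f l -> is_series f l.
Proof.
  intros [H1 H2].
  unfold is_series in *.
  apply filterlim_locally. intros eps.
  pose proof (proj1 (filterlim_locally _ _) H1 eps) as H1'.
  pose proof (proj1 (filterlim_locally _ _) H2 eps) as H2'.
  generalize (filter_and _ _ H1' H2').
  apply filter_imp. intros n [A B].
  change (ball (Re l) eps (Re (sum_n f n)) /\ ball (Im l) eps (Im (sum_n f n))).
  rewrite Re_sum_n, Im_sum_n. split; assumption.
Qed.

Lemma isR_plus (a b : nat -> R) la lb : is_series a la -> is_series b lb ->
  is_series (fun n => a n + b n)%R (la + lb)%R.
Proof. intros Ha Hb. exact (is_series_plus _ _ _ _ Ha Hb). Qed.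
Lemma isR_minus (a b : nat -> R) la lb : is_series a la -> is_series b lb ->
  is_series (fun n => a n - b n)%R (la - lb)%R.
Proof. intros Ha Hb. exact (is_series_minus _ _ _ _ Ha Hb). Qed.
Lemma isR_scal (k : R) (a : nat -> R) la : is_series a la ->
  is_series (fun n => k * a n)%R (k * la)%R.
Proof. intros Ha. exact (is_series_scal_l k _ _ Ha). Qed.
Lemma isR_ext (a b : nat -> R) (la lb : R) : (forall n, a n = b n) -> la = lb ->
  is_series a la -> is_series b lb.
Proof. intros H -> Ha. exact (is_series_ext _ _ _ H Ha). Qed.

Lemma CS_ext f g l l' : (forall n, f n = g n) -> l = l' -> CS f l -> CS g l'.
Proof.
  intros H -> [H1 H2]. split; (eapply isR_ext; [ | reflexivity | eassumption]);
  intros n; simpl; rewrite H; reflexivity.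
Qed.

Lemma CS_plus f g lf lg : CS f lf -> CS g lg -> CS (fun n => f n + g n) (lf + lg).
Proof.
  intros [A B] [C D]. split; simpl.
  - exact (isR_plus _ _ _ _ A C).
  - exact (isR_plus _ _ _ _ B D).
Qed.

Lemma CS_scal (k : C) f l : CS f l -> CS (fun n => k * f n) (k * l).
Proof.
  intros [A B]. split; simpl.
  - apply isR_minus; apply isR_scal; assumption.
  - apply isR_plus; apply isR_scal; assumption.
Qed.

Lemma im_le_Cmod (c : C) : Rabs (Im c) <= Cmod c.
Proof.
  replace (Cmod c) with (Cmod (Im c, Re c)).
  - apply (re_le_Cmod (Im c, Re c)).
  - unfold Cmod. simpl. rewrite (Rplus_comm (snd c ^ 2)). reflexivity.
Qed.



Lemma exR_le (a b : nat -> R) : (forall n, Rabs (a n) <= b n) -> ex_series b ->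
  ex_series (fun n => Rabs (a n)).
Proof.
  intros H Hb. apply (@ex_series_le R_AbsRing R_CompleteNormedModule _ b); [|exact Hb].
  intros n. change (norm (Rabs (a n))) with (Rabs (Rabs (a n))).
  rewrite Rabs_Rabsolu. apply H.
Qed.

Lemma CS_conv A B la lb : CS A la -> CS B lb ->
  ex_series (fun n => Cmod (A n)) -> ex_series (fun n => Cmod (B n)) ->
  CS (conv A B) (la * lb).
Proof.
  intros [A1 A2] [B1 B2] HA HB.
  assert (ARe := exR_le (fun n => Re (A n)) _ (fun n => re_le_Cmod (A n)) HA).
  assert (AIm := exR_le (fun n => Im (A n)) _ (fun n => im_le_Cmod (A n)) HA).
  assert (BRe := exR_le (fun n => Re (B n)) _ (fun n => re_le_Cmod (B n)) HB).
  assert (BIm := exR_le (fun n => Im (B n)) _ (fun n => im_le_Cmod (B n)) HB).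
  split.
  - eapply (isR_ext _ _ (Re la * Re lb - Im la * Im lb)%R); [ | reflexivity | apply isR_minus;
       [ apply (is_series_mult _ _ _ _ A1 B1 ARe BRe)
       | apply (is_series_mult _ _ _ _ A2 B2 AIm BIm)] ].
    intros n. unfold conv. rewrite Re_csum. rewrite <- minus_sum.
    apply sum_eq. intros; simpl. reflexivity.
  - eapply (isR_ext _ _ (Re la * Im lb + Im la * Re lb)%R); [ | reflexivity | apply isR_plus;
       [ apply (is_series_mult _ _ _ _ A1 B2 ARe BIm)
       | apply (is_series_mult _ _ _ _ A2 B1 AIm BRe)] ].
    intros n. unfold conv. rewrite Im_csum. rewrite <- plus_sum.
    apply sum_eq. intros; simpl. reflexivity.
Qed.
Open Scope C_scope.

Lemma RtoC_neq (x : R) : x <> 0%R -> RtoC x <> 0.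
Proof. intros H H'. apply H. injection H'. auto. Qed.

Lemma INRS_C k : RtoC (INR (S k)) = RtoC (INR k) + 1.
Proof. rewrite S_INR, RtoC_plus. reflexivity. Qed.

Lemma INR_S_neq k : RtoC (INR (S k)) <> 0.
Proof. apply RtoC_neq. apply not_0_INR. lia. Qed.

Lemma INR_fact_C_neq k : RtoC (INR (Factorial.fact k)) <> 0.
Proof. apply RtoC_neq. apply INR_fact_neq_0. Qed.

Lemma Cmult_cancel (a x y : C) : a <> 0 -> a * x = a * y -> x = y.
Proof.
  intros Ha H. replace x with (/ a * (a * x)) by (field; auto).
  rewrite H. field; auto.
Qed.

Lemma Ceq_of_sub (x y : C) : x - y = 0 -> x = y.
Proof. intros H. replace x with ((x - y) + y) by ring. rewrite H. ring. Qed.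

Definition Dop (y : nat -> C) (k : nat) : C := RtoC (INR (S k)) * y (S k).
Definition Zop (y : nat -> C) (k : nat) : C :=
  match k with O => 0 | S m => y m end.

Lemma conv_ext x x' y y' n : (forall k, x k = x' k) -> (forall k, y k = y' k) ->
  conv x y n = conv x' y' n.
Proof. intros H1 H2. unfold conv. apply csum_ext. intros. rewrite H1, H2. reflexivity. Qed.

Lemma conv_scal_l (a : C) x x' y n : (forall k, x' k = a * x k) ->
  conv x' y n = a * conv x y n.
Proof.
  intros H. unfold conv. rewrite <- csum_scal. apply csum_ext. intros. rewrite H. ring.
Qed.

Lemma conv_zero x y n : (forall k, y k = 0) -> conv x y n = 0.
Proof. intros H. unfold conv. apply csum_zero. intros. rewrite H. ring. Qed.

Lemma conv_D x y n :
  RtoC (INR (S n)) * conv x y (S n) = conv (Dop x) y n + conv x (Dop y) n.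
Proof.
  unfold conv.
  transitivity (csum (fun k => RtoC (INR k) * (x k * y (S n - k)%nat)) (S n)
              + csum (fun k => RtoC (INR (S n - k)) * (x k * y (S n - k)%nat)) (S n)).
  { rewrite <- csum_plus, <- csum_scal. apply csum_ext. intros k Hk.
    replace (RtoC (INR (S n))) with (RtoC (INR k) + RtoC (INR (S n - k))).
    - ring.
    - rewrite <- RtoC_plus, <- plus_INR. f_equal. f_equal. lia. }
  f_equal.
  - rewrite csum_shift. simpl (INR 0).
    replace (RtoC 0 * (x 0%nat * y (S n - 0)%nat)) with (RtoC 0) by ring.
    rewrite Cplus_0_l. apply csum_ext. intros k Hk. unfold Dop.
    replace (S n - S k)%nat with (n - k)%nat by lia. ring.
  - change (csum (fun k : nat => RtoC (INR (S n - k)) * (x k * y (S n - k)%nat)) (S n))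
      with (csum (fun k : nat => RtoC (INR (S n - k)) * (x k * y (S n - k)%nat)) n
            + RtoC (INR (S n - S n)) * (x (S n) * y (S n - S n)%nat)).
    rewrite Nat.sub_diag. simpl (INR 0).
    replace (RtoC 0 * (x (S n) * y 0%nat)) with (RtoC 0) by ring.
    rewrite Cplus_0_r. apply csum_ext. intros k Hk. unfold Dop.
    replace (S n - k)%nat with (S (n - k)) by lia. ring.
Qed.

Lemma conv_Z x y n : conv x (Zop y) (S n) = conv x y n.
Proof.
  unfold conv.
  change (csum (fun k : nat => x k * Zop y (S n - k)) (S n))
    with (csum (fun k : nat => x k * Zop y (S n - k)) n + x (S n) * Zop y (S n - S n)).
  rewrite Nat.sub_diag. simpl (Zop y 0). rewrite Cmult_0_r, Cplus_0_r.
  apply csum_ext. intros k Hk. replace (S n - k)%nat with (S (n - k)) by lia. reflexivity.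
Qed.

Definition E (w : C) (k : nat) : C := Cpow w k / RtoC (INR (Factorial.fact k)).

Lemma E_D w k : Dop (E w) k = w * E w k.
Proof.
  unfold Dop, E. rewrite fact_simpl, mult_INR, RtoC_mult. simpl Cpow.
  field. split; [apply INR_fact_C_neq | apply INR_S_neq].
Qed.

Lemma E_0 w : E w 0 = 1.
Proof. unfold E. simpl. field. Qed.

Lemma conv_E w1 w2 n : conv (E w1) (E w2) n = E (w1 + w2) n.
Proof.
  induction n.
  - unfold conv. simpl csum. rewrite ?Nat.sub_diag, !E_0. ring.
  - apply (Cmult_cancel (RtoC (INR (S n)))); [apply INR_S_neq|].
    rewrite conv_D.
    change (RtoC (INR (S n)) * E (w1 + w2) (S n)) with (Dop (E (w1 + w2)) n).
    rewrite E_D, <- IHn.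
    rewrite (conv_scal_l w1 (E w1)) by (intros; apply E_D).
    unfold conv. rewrite <- !csum_scal, <- csum_plus. apply csum_ext. intros k Hk.
    rewrite E_D. ring.
Qed.
Open Scope C_scope.

Lemma isR_zero : is_series (fun _ : nat => 0%R) 0%R.
Proof.
  assert (H : Rabs (/2) < 1) by (rewrite Rabs_pos_eq; lra).
  eapply isR_ext; [ | | apply (isR_scal 0%R _ _ (is_series_geom _ H))].
  - intros; simpl; ring.
  - ring.
Qed.

Lemma pow_nA (x : R) k : @pow_n (AbsRing.Ring R_AbsRing) x k = (x ^ k)%R.
Proof. induction k; simpl; [reflexivity| rewrite IHk; reflexivity]. Qed.

Lemma scal_powA (x a : R) k :
  @scal (AbsRing.Ring R_AbsRing) (NormedModule.ModuleSpace R_AbsRing R_NormedModule) (@pow_n (AbsRing.Ring R_AbsRing) x k) a = (x ^ k * a)%R.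
Proof. rewrite pow_nA. reflexivity. Qed.

Lemma E_abs w : ex_series (fun k => Cmod (E w k)).
Proof.
  exists (exp (Cmod w)).
  eapply isR_ext; [ | reflexivity | apply (is_exp_Reals (Cmod w))].
  intros n. cbv beta. etransitivity; [apply scal_powA|]. unfold E.
  rewrite Cmod_div by apply INR_fact_C_neq.
  rewrite Cmod_pow, Cmod_R, Rabs_pos_eq by apply pos_INR.
  reflexivity.
Qed.

Lemma CS_E_real x : CS (E (RtoC x)) (RtoC (exp x)).
Proof.
  assert (HE : forall k, E (RtoC x) k = RtoC (x ^ k / INR (Factorial.fact k))).
  { intros k. unfold E. rewrite <- RtoC_pow, RtoC_div by apply INR_fact_neq_0. reflexivity. }
  split.
  - eapply isR_ext; [ | reflexivity | apply (is_exp_Reals x)].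
    intros n. rewrite HE. simpl. rewrite pow_nA. reflexivity.
  - eapply isR_ext; [ | reflexivity | apply isR_zero].
    intros n. rewrite HE. reflexivity.
Qed.

Lemma Ci_pow_even n : Cpow Ci (2 * n) = RtoC ((-1) ^ n).
Proof.
  rewrite Cpow_mult_r. replace (Cpow Ci 2) with (RtoC (-1)).
  - rewrite RtoC_pow. reflexivity.
  - simpl. unfold Ci, Cmult. simpl. apply injective_projections; simpl; ring.
Qed.

Lemma E_Ci_even n : E Ci (2 * n) = RtoC ((-1) ^ n / INR (Factorial.fact (2 * n))).
Proof. unfold E. rewrite Ci_pow_even, RtoC_div by apply INR_fact_neq_0. reflexivity. Qed.

Lemma E_Ci_odd n : E Ci (2 * n + 1) = RtoC ((-1) ^ n / INR (Factorial.fact (2 * n + 1))) * Ci.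
Proof.
  unfold E. rewrite Cpow_add_r, Ci_pow_even, RtoC_div by apply INR_fact_neq_0.
  simpl Cpow.
  field. apply INR_fact_C_neq.
Qed.

Lemma E_scale (y : R) w k : E (RtoC y * w) k = RtoC (y ^ k) * E w k.
Proof.
  unfold E. rewrite Cpow_mult_l, RtoC_pow. field. apply INR_fact_C_neq.
Qed.

Lemma CS_E_imag y : CS (E (RtoC y * Ci)) (cos y, sin y).
Proof.
  split.
  - assert (H : is_pseries (fun k => Re (E Ci k)) y (cos y + y * 0)%R).
    { apply is_pseries_odd_even.
      - unfold cos. destruct (exist_cos (Rsqr y)) as [l Hl].
        unfold cos_in, sin_in in Hl; apply (proj2 (is_series_Reals _ _)) in Hl. unfold is_pseries.
        eapply isR_ext; [ | reflexivity | exact Hl].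
        intros k. cbv beta. rewrite E_Ci_even; etransitivity; [| symmetry; apply scal_powA].
        change (cos_n k * y² ^ k = (y ^ 2) ^ k * ((-1) ^ k / INR (Factorial.fact (2 * k))))%R.
        unfold cos_n, Rsqr. replace (y ^ 2)%R with (y * y)%R by ring. ring.
      - unfold is_pseries.
        eapply isR_ext; [ | reflexivity | exact isR_zero].
        intros k. cbv beta. rewrite E_Ci_odd; etransitivity; [| symmetry; apply scal_powA].
        change (0 = (y ^ 2) ^ k * (((-1) ^ k / INR (Factorial.fact (2 * k + 1))) * 0 - 0 * 1))%R.
        ring. }
    unfold is_pseries in H.
    eapply isR_ext; [ | | exact H]; [ | simpl; ring].
    intros k. cbv beta. rewrite E_scale; etransitivity; [apply scal_powA|].
    change ((y ^ k) * Re (E Ci k) = y ^ k * fst (E Ci k) - 0 * snd (E Ci k))%R.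
    unfold Re. ring.
  - assert (H : is_pseries (fun k => Im (E Ci k)) y (0 + y * (let (a, _) := exist_sin (Rsqr y) in a))%R).
    { apply is_pseries_odd_even.
      - unfold is_pseries.
        eapply isR_ext; [ | reflexivity | exact isR_zero].
        intros k. cbv beta. rewrite E_Ci_even; etransitivity; [| symmetry; apply scal_powA].
        change (0 = (y ^ 2) ^ k * 0)%R.
        ring.
      - destruct (exist_sin (Rsqr y)) as [l Hl].
        unfold cos_in, sin_in in Hl; apply (proj2 (is_series_Reals _ _)) in Hl. unfold is_pseries.
        eapply isR_ext; [ | reflexivity | exact Hl].
        intros k. cbv beta. rewrite E_Ci_odd; etransitivity; [| symmetry; apply scal_powA].
        change (sin_n k * y² ^ k = (y ^ 2) ^ k * (((-1) ^ k / INR (Factorial.fact (2 * k + 1))) * 1 + 0 * 0))%R.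
        unfold sin_n, Rsqr. replace (y ^ 2)%R with (y * y)%R by ring. ring. }
    unfold is_pseries in H.
    eapply isR_ext; [ | | exact H]; [ | simpl; unfold sin; destruct (exist_sin (Rsqr y)); ring].
    intros k. cbv beta. rewrite E_scale; etransitivity; [apply scal_powA|].
    change ((y ^ k) * Im (E Ci k) = y ^ k * snd (E Ci k) + 0 * fst (E Ci k))%R.
    unfold Im. ring.
Qed.

Lemma CS_E w : CS (E w) (Cexp w).
Proof.
  destruct w as [x y].
  eapply CS_ext; [ | | apply (CS_conv _ _ _ _ (CS_E_real x) (CS_E_imag y) (E_abs _) (E_abs _))].
  - intros n. rewrite conv_E. f_equal. unfold Ci, Cmult, Cplus. simpl.
    apply injective_projections; simpl; ring.
  - unfold Cexp, Cmult. simpl. apply injective_projections; simpl; ring.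
Qed.
Open Scope C_scope.

Definition fh (a b c : C) (n : nat) : C :=
  poch a n * poch b n / (poch c n * RtoC (INR (Factorial.fact n))).

Lemma cN_nz (c : C) (hc : forall n : nat, c <> - RtoC (INR n)) n : c + RtoC (INR n) <> 0.
Proof.
  intros H. apply (hc n). replace c with ((c + RtoC (INR n)) - RtoC (INR n)) by ring.
  rewrite H. ring.
Qed.

Lemma poch_nz (c : C) (hc : forall n : nat, c <> - RtoC (INR n)) n : poch c n <> 0.
Proof.
  induction n; simpl.
  - intros H. injection H. lra.
  - apply Cmult_neq_0; auto. apply cN_nz; auto.
Qed.

Lemma f_rec a b c (hc : forall n : nat, c <> - RtoC (INR n)) n :
  RtoC (INR (S n)) * (c + RtoC (INR n)) * fh a b c (S n)
  = (a + RtoC (INR n)) * (b + RtoC (INR n)) * fh a b c n.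
Proof.
  unfold fh. simpl poch. rewrite fact_simpl, mult_INR, RtoC_mult.
  field. repeat split; auto using poch_nz, cN_nz, INR_S_neq, INR_fact_C_neq.
Qed.

Open Scope R_scope.
Lemma ratio_ex (t : nat -> R) N q : (forall n, 0 <= t n) -> 0 <= q < 1 ->
  (forall n, (N <= n)%nat -> t (S n) <= q * t n) -> ex_series t.
Proof.
  intros Hpos Hq Hr.
  apply (ex_series_incr_n t N).
  assert (Hb : forall k, t (N + k)%nat <= t N * q ^ k).
  { induction k.
    - rewrite Nat.add_0_r. simpl. lra.
    - replace (N + S k)%nat with (S (N + k)) by lia.
      eapply Rle_trans; [apply Hr; lia|]. simpl.
      apply Rle_trans with (q * (t N * q ^ k)); [apply Rmult_le_compat_l; lra|]. lra. }
  apply (@ex_series_le R_AbsRing R_CompleteNormedModule _ (fun k => t N * q ^ k)).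
  - intros k. change (Rabs (t (N + k)%nat) <= t N * q ^ k).
    rewrite Rabs_pos_eq by apply Hpos. apply Hb.
  - exists (t N * / (1 - q)).
    apply isR_scal. apply is_series_geom. rewrite Rabs_pos_eq; lra.
Qed.

Lemma Cmod_INR n : Cmod (RtoC (INR n)) = INR n.
Proof. rewrite Cmod_R, Rabs_pos_eq; auto using pos_INR. Qed.

Lemma hyp_abs a b c (hc : forall n : nat, c <> (- RtoC (INR n))%C) z : Cmod z < 1 ->
  ex_series (fun n => Cmod (fh a b c n * Cpow z n)%C).
Proof.
  intros Hz.
  set (r := Cmod z). assert (Hr0 : 0 <= r) by apply Cmod_ge_0. assert (Hr1 : r < 1) by exact Hz.
  set (K := Cmod a + Cmod b + Cmod c).
  assert (HK : 0 <= Cmod a /\ 0 <= Cmod b /\ 0 <= Cmod c) by (repeat split; apply Cmod_ge_0).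
  assert (HK0 : 0 <= K) by (unfold K; lra).
  set (rho := 2 / (1 + r)).
  set (q := rho * rho * r).
  assert (Hq : 0 <= q < 1).
  { unfold q, rho. split.
    - apply Rmult_le_pos; [|lra]. apply Rmult_le_pos; apply Rlt_le, Rdiv_lt_0_compat; lra.
    - replace (2 / (1 + r) * (2 / (1 + r)) * r) with (4 * r / ((1 + r) * (1 + r))) by (field; lra).
      apply Rmult_lt_reg_r with ((1 + r) * (1 + r)); [nra|].
      unfold Rdiv. rewrite Rmult_assoc, Rinv_l by nra. assert (0 < (1 - r) * (1 - r)) by (apply Rmult_lt_0_compat; lra). nra. }
  destruct (INR_unbounded (K * (3 + r) / (1 - r) + K)) as [N HN].
  apply (ratio_ex _ N q); [intros; apply Cmod_ge_0| exact Hq|].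
  intros n Hn.
  set (x := INR n).
  assert (Hx : x > K * (3 + r) / (1 - r) + K).
  { apply Rlt_le_trans with (INR N); [lra|]. apply le_INR. exact Hn. }
  assert (HKx : K * (3 + r) / (1 - r) >= 0).
  { apply Rle_ge. apply Rmult_le_pos; [nra|]. apply Rlt_le, Rinv_0_lt_compat. lra. }
  assert (Hx1 : x * (1 - r) >= K * (3 + r)).
  { assert (x - K >= K * (3 + r) / (1 - r)) by lra.
    assert (x * (1 - r) >= (x - K) * (1 - r)) by nra.
    assert ((x - K) * (1 - r) >= K * (3 + r) / (1 - r) * (1 - r)) by nra.
    replace (K * (3 + r) / (1 - r) * (1 - r)) with (K * (3 + r)) in H1 by (field; lra).
    lra. }
  assert (Hrec : (fh a b c (S n) * Cpow z (S n)
     = (fh a b c n * Cpow z n) * ((a + RtoC x) * (b + RtoC x) * z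
                                   / (RtoC (INR (S n)) * (c + RtoC x))))%C).
  { assert (H := f_rec a b c hc n).
    apply (Cmult_cancel (RtoC (INR (S n)) * (c + RtoC (INR n)))%C);
      [apply Cmult_neq_0; auto using INR_S_neq, cN_nz|].
    rewrite Cpow_S.
    transitivity ((RtoC (INR (S n)) * (c + RtoC (INR n)) * fh a b c (S n)) * (z * Cpow z n))%C; [ring|].
    rewrite H. unfold x. field. split; auto using INR_S_neq, cN_nz. }
  rewrite Hrec, Cmod_mult.
  rewrite (Rmult_comm q). apply Rmult_le_compat_l; [apply Cmod_ge_0|].
  rewrite Cmod_div by (apply Cmult_neq_0; [apply INR_S_neq | apply (cN_nz c hc n)]).
  rewrite !Cmod_mult.
  rewrite Cmod_INR, S_INR. fold x. change (Cmod z) with r.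
  assert (Ha : Cmod (a + RtoC x)%C <= K + x).
  { eapply Rle_trans; [apply Cmod_triangle|]. unfold x. rewrite Cmod_INR. unfold K. lra. }
  assert (Hb : Cmod (b + RtoC x)%C <= K + x).
  { eapply Rle_trans; [apply Cmod_triangle|]. unfold x. rewrite Cmod_INR. unfold K. lra. }
  assert (Hc : x - K <= Cmod (c + RtoC x)%C).
  { assert (Cmod (RtoC x) <= Cmod (c + RtoC x)%C + Cmod (- c)%C).
    { replace (RtoC x) with ((c + RtoC x) + - c)%C at 1 by ring. apply Cmod_triangle. }
    rewrite Cmod_opp in H. unfold x in H. rewrite Cmod_INR in H. fold x in H. unfold K. lra. }
  assert (Hpos : 0 < x - K).
  { assert (0 <= K * (3 + r) / (1 - r)) by lra. lra. }
  assert (Hden : 0 < (x + 1) * Cmod (c + RtoC x)%C) by nra.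
  apply Rle_trans with ((K + x) * (K + x) * r / ((x + 1) * (x - K))).
  { unfold Rdiv. apply Rle_trans with ((K + x) * (K + x) * r * / ((x + 1) * Cmod (c + RtoC x)%C)).
    - apply Rmult_le_compat_r; [apply Rlt_le, Rinv_0_lt_compat; lra|].
      apply Rmult_le_compat_r; [lra|].
      apply Rmult_le_compat; try apply Cmod_ge_0; lra.
    - apply Rmult_le_compat_l; [apply Rmult_le_pos; [apply Rmult_le_pos; lra | lra]|].
      apply Rinv_le_contravar; nra. }
  assert (Hrho : K + x <= rho * (x - K)).
  { unfold rho. apply Rmult_le_reg_r with (1 + r); [lra|].
    replace (2 / (1 + r) * (x - K) * (1 + r)) with (2 * (x - K)) by (field; lra).
    nra. }
  assert (Hsq : (K + x) * (K + x) <= rho * rho * ((x - K) * (x - K))) by nra.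
  apply Rmult_le_reg_r with ((x + 1) * (x - K)); [nra|].
  unfold Rdiv. rewrite Rmult_assoc, Rinv_l by nra. rewrite Rmult_1_r.
  unfold q.
  assert (Hs1 : (K + x) * (K + x) * r <= rho * rho * ((x - K) * (x - K)) * r)
    by (apply Rmult_le_compat_r; lra).
  assert (Hs2 : (x - K) * (x - K) <= (x + 1) * (x - K))
    by (apply Rmult_le_compat_r; lra).
  assert (Hs3 : 0 <= rho * rho * r).
  { fold q. lra. }
  assert (Hs4 : rho * rho * r * ((x - K) * (x - K)) <= rho * rho * r * ((x + 1) * (x - K)))
    by (apply Rmult_le_compat_l; lra).
  lra.
Qed.
Open Scope C_scope.

Lemma csum_lin5 (F1 F2 F3 F4 F5 : nat -> C) c1 c2 c3 n :
  csum (fun k => F1 k - F2 k + c1 * F3 k - c2 * F4 k - c3 * F5 k) n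
  = csum F1 n - csum F2 n + c1 * csum F3 n - c2 * csum F4 n - c3 * csum F5 n.
Proof. induction n; simpl; [ring | rewrite IHn; ring]. Qed.

Lemma conv_lin5 x (Y1 Y2 Y3 Y4 Y5 : nat -> C) c1 c2 c3 n :
  conv x (fun k => Y1 k - Y2 k + c1 * Y3 k - c2 * Y4 k - c3 * Y5 k) n
  = conv x Y1 n - conv x Y2 n + c1 * conv x Y3 n - c2 * conv x Y4 n - c3 * conv x Y5 n.
Proof.
  unfold conv. rewrite <- csum_lin5. apply csum_ext. intros. ring.
Qed.

Lemma lin1 (A B X k : C) : A = B -> X = k * (A - B) -> X = 0.
Proof. intros H1 H2. rewrite H2, H1. ring. Qed.

Lemma INR0_C : RtoC (INR 0) = 0.
Proof. reflexivity. Qed.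

Lemma Lf_zero a b c (hc : forall n : nat, c <> - RtoC (INR n)) k :
  let f := fh a b c in
  Zop (Dop (Dop f)) k - Zop (Zop (Dop (Dop f))) k + c * Dop f k
    - (a + b + 1) * Zop (Dop f) k - a * b * f k = 0.
Proof.
  intros f.
  destruct k as [|[|j]]; unfold Zop, Dop.
  - pose proof (f_rec a b c hc 0%nat) as H. fold f in H.
    apply (lin1 _ _ _ 1 H). rewrite !INRS_C, !INR0_C. ring.
  - pose proof (f_rec a b c hc 1%nat) as H. fold f in H.
    apply (lin1 _ _ _ 1 H). rewrite !INRS_C, !INR0_C. ring.
  - pose proof (f_rec a b c hc (S (S j))) as H. fold f in H.
    apply (lin1 _ _ _ 1 H). rewrite !INRS_C. ring.
Qed.

Lemma Ci_sq : Ci * Ci = - 1.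
Proof. unfold Ci, Cmult. apply injective_projections; simpl; ring. Qed.

Lemma qq_Ci (q X : C) : q * (q - Ci * X) = - ((Ci * q) * (Ci * q)) - (Ci * q) * X.
Proof. replace (Ci * q * (Ci * q)) with (Ci * Ci * (q * q)) by ring. rewrite Ci_sq. ring. Qed.

Lemma qq_Ci2 (q : C) : q * q = - ((Ci * q) * (Ci * q)).
Proof. replace (Ci * q * (Ci * q)) with (Ci * Ci * (q * q)) by ring. rewrite Ci_sq. ring. Qed.

Lemma conv_De w y k :
  RtoC (INR (S k)) * conv (E w) y (S k) = w * conv (E w) y k + conv (E w) (Dop y) k.
Proof.
  rewrite conv_D. f_equal. apply conv_scal_l. intros; apply E_D.
Qed.

Lemma conv_rec a b c q (hc : forall n : nat, c <> - RtoC (INR n)) m :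
  let N := RtoC (INR (S (S m))) in
  let G := conv (E (Ci * q)) (fh a b c) in
  ((N + 1) * (c + N)) * G (S (S (S m)))
  = ((a + N) * (b + N) + Ci * q * (c + 2 * N)) * G (S (S m))
    + q * (q - Ci * (a + b + 2 * N - 1)) * G (S m) - q * q * G m.
Proof.
  intros N G.
  set (e := E (Ci * q)). set (f := fh a b c).
  assert (Hstar : conv e (fun k => Zop (Dop (Dop f)) k - Zop (Zop (Dop (Dop f))) k
      + c * Dop f k - (a + b + 1) * Zop (Dop f) k - a * b * f k) (S (S m)) = 0).
  { unfold conv. apply csum_zero. intros k. pose proof (Lf_zero a b c hc (S (S m) - k)) as HL. cbv zeta in HL. cbv beta. unfold f. rewrite HL. ring. }
  rewrite conv_lin5, !conv_Z in Hstar.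
  set (C1 := conv e (Dop f)) in *. set (C2 := conv e (Dop (Dop f))) in *.
  assert (P1 : forall k, RtoC (INR (S k)) * G (S k) = Ci * q * G k + C1 k)
    by (intros; apply conv_De).
  assert (P2 : forall k, RtoC (INR (S k)) * C1 (S k) = Ci * q * C1 k + C2 k)
    by (intros; apply conv_De).
  assert (E2 : forall k, C2 k = RtoC (INR (S k)) * C1 (S k) - Ci * q * C1 k)
    by (intros k; rewrite P2; ring).
  assert (E1 : forall k, C1 k = RtoC (INR (S k)) * G (S k) - Ci * q * G k)
    by (intros k; rewrite P1; ring).
  rewrite !E2 in Hstar. rewrite !E1 in Hstar.
  change (conv e f (S (S m))) with (G (S (S m))) in Hstar.
  apply Ceq_of_sub.
  apply (lin1 _ _ _ 1 Hstar).
  rewrite (qq_Ci q), (qq_Ci2 q).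
  unfold N. rewrite !INRS_C. clear E1 E2 P1 P2. clearbody G C1 C2 e f. ring.
Qed.

Lemma fh0 a b c : fh a b c 0%nat = 1.
Proof. unfold fh. simpl. field. Qed.

Lemma fh1 a b c (hc : forall n : nat, c <> - RtoC (INR n)) : fh a b c 1%nat = a * b / c.
Proof.
  assert (Hc0 : c <> 0). { intros H. apply (hc 0%nat). rewrite H, INR0_C. ring. }
  pose proof (f_rec a b c hc 0%nat) as H. rewrite fh0, !INRS_C, !INR0_C in H.
  apply (Cmult_cancel c); [exact Hc0|].
  replace (c * fh a b c 1) with ((0 + 1) * (c + 0) * fh a b c 1) by ring.
  rewrite H. field. exact Hc0.
Qed.

Lemma fh2 a b c (hc : forall n : nat, c <> - RtoC (INR n)) :
  fh a b c 2%nat = a * (a + 1) * b * (b + 1) / (2 * c * (c + 1)).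
Proof.
  assert (Hc0 : c <> 0). { intros H. apply (hc 0%nat). rewrite H, INR0_C. ring. }
  assert (Hc1 : c + 1 <> 0).
  { pose proof (cN_nz c hc 1%nat) as H. rewrite INRS_C, INR0_C in H.
    replace (0 + 1) with (RtoC 1) in H by ring. exact H. }
  pose proof (f_rec a b c hc 1%nat) as H. rewrite (fh1 a b c hc), !INRS_C, !INR0_C in H.
  assert (H2 : (2 : C) <> 0) by (apply RtoC_neq; lra).
  apply (Cmult_cancel (2 * (c + 1))). { apply Cmult_neq_0; auto. }
  replace (2 * (c + 1) * fh a b c 2) with ((0 + 1 + 1) * (c + (0 + 1)) * fh a b c 2) by ring.
  rewrite H. field. auto.
Qed.

Lemma E1 w : E w 1%nat = w.
Proof. unfold E. simpl. field. Qed.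
Lemma E2 w : E w 2%nat = w * w / 2.
Proof.
  unfold E. simpl. replace (RtoC (1 + 1)) with (2 : C).
  - field.
  - rewrite RtoC_plus. ring.
Qed.

Lemma seq_ident a b c q (hc : forall n : nat, c <> - RtoC (INR n)) (w : nat -> C)
  (h0 : w 0%nat = 1)
  (h1 : w 1%nat = a * b / c + Ci * q)
  (h2 : w 2%nat = Ci * a * b * q / c
                   + a * (a + 1) * b * (b + 1) / (2 * c * (c + 1)) - q * q / 2)
  (hn : forall n : nat, (2 <= n)%nat ->
     let N := RtoC (INR n) in
     w (S n) = ((a + N) * (b + N) + Ci * q * (c + 2 * N)) / ((N + 1) * (c + N)) * w n
             + q * (q - Ci * (a + b + 2 * N - 1)) / ((N + 1) * (c + N)) * w (n - 1)%nat
             - q * q / ((N + 1) * (c + N)) * w (n - 2)%nat) :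
  forall n, w n = conv (E (Ci * q)) (fh a b c) n.
Proof.
  set (G := conv (E (Ci * q)) (fh a b c)).
  assert (Hc0 : c <> 0). { intros H. apply (hc 0%nat). rewrite H, INR0_C. ring. }
  assert (Hc1 : c + 1 <> 0).
  { pose proof (cN_nz c hc 1%nat) as H. rewrite INRS_C, INR0_C in H.
    replace (0 + 1) with (RtoC 1) in H by ring. exact H. }
  assert (H2 : (2 : C) <> 0) by (apply RtoC_neq; lra).
  assert (G0 : G 0%nat = 1).
  { unfold G, conv. cbn [csum Nat.sub]. rewrite E_0, fh0. ring. }
  assert (G1 : G 1%nat = a * b / c + Ci * q).
  { unfold G, conv. cbn [csum Nat.sub]. rewrite E_0, fh0, E1, (fh1 a b c hc). ring. }
  assert (G2 : G 2%nat = Ci * a * b * q / c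
                   + a * (a + 1) * b * (b + 1) / (2 * c * (c + 1)) - q * q / 2).
  { unfold G, conv. cbn [csum Nat.sub]. rewrite E_0, fh0, E1, E2, (fh1 a b c hc), (fh2 a b c hc).
    rewrite (qq_Ci2 q). field. auto. }
  assert (Hall : forall m, w m = G m /\ w (S m) = G (S m) /\ w (S (S m)) = G (S (S m))).
  { induction m as [|m [IH0 [IH1 IH2]]].
    - rewrite h0, h1, h2, G0, G1, G2. auto.
    - split; [exact IH1| split; [exact IH2|]].
      pose proof (hn (S (S m)) ltac:(lia)) as H. cbv zeta in H.
      replace (S (S m) - 1)%nat with (S m) in H by lia.
      replace (S (S m) - 2)%nat with m in H by lia.
      rewrite H, IH0, IH1, IH2.
      pose proof (conv_rec a b c q hc m) as HR. cbv zeta in HR. fold G in HR.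
      set (N := RtoC (INR (S (S m)))) in *.
      assert (HN1 : N + 1 <> 0) by (unfold N; rewrite <- INRS_C; apply INR_S_neq).
      assert (HcN : c + N <> 0) by (apply cN_nz; auto).
      symmetry. apply (Cmult_cancel ((N + 1) * (c + N))); [apply Cmult_neq_0; auto|].
      rewrite HR. field. auto. }
  intros n. apply Hall.
Qed.
Open Scope C_scope.

Lemma E_mulz w z k : E (w * z) k = E w k * Cpow z k.
Proof. unfold E. rewrite Cpow_mult_l. field. apply INR_fact_C_neq. Qed.

Lemma CS_hyp a b c (hc : forall n : nat, c <> - RtoC (INR n)) z : Cmod z < 1 ->
  CS (fun n => fh a b c n * Cpow z n) (hypF a b c z).
Proof.
  intros Hz. pose proof (hyp_abs a b c hc z Hz) as HA.
  split.
  - unfold hypF, CSeries. simpl.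
    apply Series_correct. apply ex_series_Rabs.
    exact (exR_le (fun n => Re (hyp_term a b c z n)) _ (fun n => re_le_Cmod _) HA).
  - unfold hypF, CSeries. simpl.
    apply Series_correct. apply ex_series_Rabs.
    exact (exR_le (fun n => Im (hyp_term a b c z n)) _ (fun n => im_le_Cmod _) HA).
Qed.

Lemma CS_G a b c q (hc : forall n : nat, c <> - RtoC (INR n)) z : Cmod z < 1 ->
  CS (fun n => conv (E (Ci * q)) (fh a b c) n * Cpow z n) (Cexp (Ci * q * z) * hypF a b c z).
Proof.
  intros Hz.
  eapply CS_ext; [ | reflexivity |
    apply (CS_conv _ _ _ _ (CS_E (Ci * q * z)) (CS_hyp a b c hc z Hz) (E_abs _) (hyp_abs a b c hc z Hz))].
  intros n. unfold conv.
  transitivity (csum (fun k => Cpow z n * (E (Ci * q) k * fh a b c (n - k)%nat)) n).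
  - apply csum_ext. intros k Hk. rewrite E_mulz.
    replace (Cpow z n) with (Cpow z k * Cpow z (n - k)%nat).
    + ring.
    + rewrite <- Cpow_add_r. f_equal. lia.
  - rewrite csum_scal. ring.
Qed.

Theorem theorem3p5 (a b c p : C) (u v : nat -> C)
  (hc : forall n : nat, c <> - RtoC (INR n))
  (hu0 : u 0%nat = 1)
  (hu1 : u 1%nat = a * b / c + Ci * p)
  (hu2 : u 2%nat = Ci * a * b * p / c
                   + a * (a + 1) * b * (b + 1) / (2 * c * (c + 1)) - p * p / 2)
  (hv0 : v 0%nat = 1)
  (hv1 : v 1%nat = a * b / c - Ci * p)
  (hv2 : v 2%nat = - (Ci * a * b * p / c)
                   + a * (a + 1) * b * (b + 1) / (2 * c * (c + 1)) - p * p / 2)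
  (hun : forall n : nat, (2 <= n)%nat ->
     let N := RtoC (INR n) in
     u (S n) = ((a + N) * (b + N) + Ci * p * (c + 2 * N)) / ((N + 1) * (c + N)) * u n
             + p * (p - Ci * (a + b + 2 * N - 1)) / ((N + 1) * (c + N)) * u (n - 1)%nat
             - p * p / ((N + 1) * (c + N)) * u (n - 2)%nat)
  (hvn : forall n : nat, (2 <= n)%nat ->
     let N := RtoC (INR n) in
     v (S n) = ((a + N) * (b + N) - Ci * p * (c + 2 * N)) / ((N + 1) * (c + N)) * v n
             + p * (p + Ci * (a + b + 2 * N - 1)) / ((N + 1) * (c + N)) * v (n - 1)%nat
             - p * p / ((N + 1) * (c + N)) * v (n - 2)%nat) :
  forall z : C, (Cmod z < 1)%R ->
    is_series (fun n : nat => (u n + v n) / 2 * Cpow z n) (Ccos (p * z) * hypF a b c z).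
Proof.
  intros z Hz.
  pose proof (seq_ident a b c p hc u hu0 hu1 hu2 hun) as Gu.
  assert (Gv : forall n, v n = conv (E (Ci * (- p))) (fh a b c) n).
  { apply (seq_ident a b c (- p) hc v hv0).
    - rewrite hv1. ring.
    - rewrite hv2. unfold Cdiv. ring.
    - intros n Hn N. pose proof (hvn n Hn) as H. cbv zeta in H. rewrite H. unfold N, Cdiv. ring. }
  assert (H2 : (2 : C) <> 0) by (apply RtoC_neq; lra).
  apply CS_is_series.
  eapply CS_ext; [ | |
    apply (CS_plus _ _ _ _ (CS_scal (/ 2) _ _ (CS_G a b c p hc z Hz))
                           (CS_scal (/ 2) _ _ (CS_G a b c (- p) hc z Hz)))].
  - intros n. cbv beta. rewrite <- Gu, <- Gv. field; exact H2.
  - unfold Ccos.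
    replace (Ci * p * z) with (Ci * (p * z)) by ring.
    replace (Ci * - p * z) with (- (Ci * (p * z))) by ring.
    field; exact H2.
Qed.
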